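(* Let $n\geq 2$, $m>0$, and let $\tau$ be a maximal simplex of $\Delta_m^{n,2}=\mathrm{VR}(\{0,\ldots,m\}^n;2)$. Writing $V=\{0,\ldots,m\}^n$, one of the following holds: (i) $\tau=N[x]\cap V$ for some $x\in\mathbb{Z}^n$; (ii) $\tau=\{x,x^{i_0},x^{j_0},x^{i_0,j_0}\}\cap V$ for some $x\in\mathbb{Z}^n$ and $i_0,j_0\in[n]^{\pm}$; (iii) $\tau=\{x,x^{i_0,j_0},x^{j_0,k_0},x^{i_0,k_0}\}\cap V$ for some $x\in\mathbb{Z}^n$ and $i_0,j_0,k_0\in[n]^{\pm}$.
   Context: $\mathbb{Z}^n$ carries the Manhattan metric $d(x,y)=\sum_{i=1}^n|x_i-y_i|$; $\mathrm{VR}(X;r)$ is the simplicial complex on $X$ whose simplices are finite subsets of diameter at most $r$. Write $[n]=\{1,\ldots,n\}$, $[-n]=\{-1,\ldots,-n\}$, $[n]^{\pm}=[n]\cup[-n]$. For $x\in\mathbb{Z}^n$ and $i_1,\ldots,i_k\in[n]^{\pm}$ with pairwise distinct absolute values, $x^{i_1,\ldots,i_k}$ is obtained from $x$ by adding $1$ to coordinate $j$ for each $j\in\{i_1,\ldots,i_k\}\cap[n]$ and subtracting $1$ from coordinate $j$ for each $j$ with $-j\in\{i_1,\ldots,i_k\}$. $N[x]=\{y\in\mathbb{Z}^n: d(x,y)\leq 1\}$. *)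

(* Defs.v *)
From HB Require Import structures.
From mathcomp Require Import all_boot all_order all_algebra.
Set Implicit Arguments. Unset Strict Implicit. Unset Printing Implicit Defensive.
Import Order.TTheory GRing.Theory Num.Theory.

Notation pt n := {ffun 'I_n -> int}.

Definition mdist (n : nat) (x y : pt n) : nat :=
  \sum_(i < n) absz (x i - y i)%R.

Definition inV (n m : nat) (x : pt n) : Prop :=
  forall i : 'I_n, (0 <= x i)%R /\ (x i <= m%:Z)%R.

(* A simplex of VR(V;2): a subset of V (automatically finite) of diameter <= 2.
   Subsets of Z^n are represented as predicates pt n -> Prop. *)
Definition VR_simplex (n m : nat) (tau : pt n -> Prop) : Prop :=
  (forall x, tau x -> inV m x) /\
  (forall x y, tau x -> tau y -> mdist x y <= 2).

Definition maximal_simplex (n m : nat) (tau : pt n -> Prop) : Prop :=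
  VR_simplex m tau /\
  (forall sigma : pt n -> Prop, VR_simplex m sigma ->
     (forall x, tau x -> sigma x) -> forall x, sigma x -> tau x).

(* Signed index in [n]^{+-}: (j, true) stands for j+1, (j, false) for -(j+1).
   The absolute value is the first component. *)
Definition sidx (n : nat) := ('I_n * bool)%type.

(* x^{i}: add 1 (sign +) or subtract 1 (sign -) at coordinate |i|.
   For indices with distinct absolute values, x^{i1,...,ik} is the iterate. *)
Definition shift (n : nat) (x : pt n) (i : sidx n) : pt n :=
  [ffun j => if j == i.1 then (x j + (if i.2 then 1 else -1))%R else x j].

(* Main.v *)
Require Import Defs.
From mathcomp Require Import all_boot all_order all_algebra.
From mathcomp Require Import zify.
From Stdlib Require Import Classical ClassicalEpsilon.
Set Implicit Arguments. Unset Strict Implicit. Unset Printing Implicit Defensive.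
Import Order.TTheory GRing.Theory Num.Theory.

Lemma sum_split1 n (f : 'I_n -> nat) a :
  (\sum_k f k = f a + \sum_(k | k != a) f k)%N.
Proof. by rewrite (bigD1 a). Qed.

Lemma sum_split2 n (f : 'I_n -> nat) a b : b != a ->
  (\sum_k f k = f a + f b + \sum_(k | (k != a) && (k != b)) f k)%N.
Proof. by move=> ba; rewrite (bigD1 a) // (bigD1 b) //= addnA. Qed.

Lemma sum_split3 n (f : 'I_n -> nat) a b c : b != a -> c != a -> c != b ->
  (\sum_k f k = f a + f b + f c +
     \sum_(k | (k != a) && (k != b) && (k != c)) f k)%N.
Proof.
by move=> ba ca cb; rewrite (bigD1 a) // (bigD1 b) //= (bigD1 c) /= ?ca ?cb // !addnA.
Qed.

Lemma term_le n (x y : pt n) i : (absz (x i - y i)%R <= mdist x y)%N.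
Proof. by rewrite /mdist (sum_split1 _ i) leq_addr. Qed.

Lemma mdist_sym n (x y : pt n) : mdist x y = mdist y x.
Proof. by apply: eq_bigr => i _; rewrite -abszN opprB. Qed.

Lemma mdist_tri n (x y z : pt n) : (mdist x z <= mdist x y + mdist y z)%N.
Proof.
rewrite /mdist -big_split /=; apply: leq_sum => i _.
set u := x i; set v := y i; set w := z i. lia.
Qed.

Lemma mdist0 n (x y : pt n) : mdist x y = 0%N -> x = y.
Proof.
move=> /eqP; rewrite sum_nat_eq0 => /forallP H; apply/ffunP => i.
move: (H i) => /= /eqP; lia.
Qed.

Lemma mdistxx n (x : pt n) : mdist x x = 0%N.
Proof. by apply: big1 => i _; rewrite subrr. Qed.
Definition sg (b : bool) : int := if b then 1%R else (-1)%R.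
Definition pp n (p : pt n) (s : 'I_n -> bool) (P : 'I_n -> bool) : pt n :=
  [ffun k => if P k then (p k + sg (s k))%R else p k].
Definition inbox n (p : pt n) (s : 'I_n -> bool) (y : pt n) : Prop :=
  forall k, y k = p k \/ y k = (p k + sg (s k))%R.
Definition dl n (p y : pt n) (k : 'I_n) : bool := y k != p k.

Lemma sg_ne (x : int) b : (x + sg b != x)%R.
Proof. rewrite /sg; case: b; lia. Qed.

Lemma box_pp n (p : pt n) s y : inbox p s y -> y = pp p s (dl p y).
Proof.
move=> H; apply/ffunP => k; rewrite ffunE /dl.
by case: (H k) => ->; rewrite ?eqxx ?sg_ne.
Qed.

Lemma dl_pp n (p : pt n) s P k : dl p (pp p s P) k = P k.
Proof. rewrite /dl ffunE; case: (P k); by rewrite ?sg_ne ?eqxx. Qed.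

Lemma inbox_pp n (p : pt n) s P : inbox p s (pp p s P).
Proof. by move=> k; rewrite ffunE; case: (P k); [right|left]. Qed.

Lemma pp_ext n (p : pt n) s P Q : P =1 Q -> pp p s P = pp p s Q.
Proof. by move=> H; apply/ffunP => k; rewrite !ffunE H. Qed.

Lemma pp0 n (p : pt n) s : pp p s (fun _ => false) = p.
Proof. by apply/ffunP => k; rewrite ffunE. Qed.

Lemma mdist_pp n (p : pt n) s P Q :
  mdist (pp p s P) (pp p s Q) = (\sum_k ((P k (+) Q k) : nat))%N.
Proof.
apply: eq_bigr => k _; rewrite !ffunE.
set x := p k; rewrite /sg; case: (P k); case: (Q k); case: (s k) => /=; lia.
Qed.

Lemma mdist_box n (p : pt n) s y z : inbox p s y -> inbox p s z ->
  mdist y z = (\sum_k ((dl p y k (+) dl p z k) : nat))%N.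
Proof. by move=> Hy Hz; rewrite {1}(box_pp Hy) {1}(box_pp Hz) mdist_pp. Qed.

Lemma pat_eq n (p : pt n) s t P : inbox p s t -> (forall k, dl p t k = P k) ->
  t = pp p s P.
Proof. by move=> Ht H; rewrite (box_pp Ht); apply: pp_ext. Qed.

Lemma shift1 n (p : pt n) s a : shift p (a, s a) = pp p s (fun k => k == a).
Proof. by apply/ffunP => k; rewrite !ffunE /=; case: eqP => [->|]. Qed.

Lemma shift2 n (p : pt n) s a b : b != a ->
  shift (shift p (a, s a)) (b, s b) = pp p s (fun k => (k == a) || (k == b)).
Proof.
move=> ba; apply/ffunP => k; rewrite !ffunE /=.
have [->|kb] := eqVneq k b; first by rewrite (negbTE ba) orbT.
by rewrite orbF; case: eqP => [->|].
Qed.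

Lemma xsum3 n (P Q : 'I_n -> bool) a b c : b != a -> c != a -> c != b ->
  (forall k, k != a -> k != b -> k != c -> P k = false) ->
  (\sum_k ((P k (+) Q k) : nat) = (P a (+) Q a) + (P b (+) Q b) + (P c (+) Q c) +
     \sum_(k | (k != a) && (k != b) && (k != c)) (Q k : nat))%N.
Proof.
move=> ba ca cb HP; rewrite (sum_split3 _ ba ca cb); congr (_ + _)%N.
by apply: eq_bigr => k /andP [/andP [ka kb] kc]; rewrite HP.
Qed.

Lemma le2_pat n (p : pt n) s P Q a b : b != a ->
  (forall k, k != a -> k != b -> P k = Q k) ->
  (mdist (pp p s P) (pp p s Q) <= 2)%N.
Proof.
move=> ba H; rewrite mdist_pp (sum_split2 _ ba) big1.
  by case: (P a); case: (Q a); case: (P b); case: (Q b).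
by move=> k /andP [ka kb]; rewrite H // addbb.
Qed.

Lemma rest0 n (Q : 'I_n -> bool) (R : pred 'I_n) :
  (\sum_(k | R k) (Q k : nat))%N = 0%N -> forall k, R k -> Q k = false.
Proof.
move=> /eqP; rewrite sum_nat_eq0 => /forallP H k Rk.
by move: (H k); rewrite Rk /=; case: (Q k).
Qed.
Definition Concl (n m : nat) (tau : pt n -> Prop) : Prop :=
  (exists x : pt n, forall y : pt n,
      tau y <-> ((mdist x y <= 1)%N /\ inV m y))
  \/
  (exists (x : pt n) (i0 j0 : sidx n), i0.1 != j0.1 /\
     forall y : pt n, tau y <->
       (y \in [:: x; shift x i0; shift x j0; shift (shift x i0) j0]) /\ inV m y)
  \/
  (exists (x : pt n) (i0 j0 k0 : sidx n),
     [/\ i0.1 != j0.1, j0.1 != k0.1 & i0.1 != k0.1] /\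
     forall y : pt n, tau y <->
       (y \in [:: x; shift (shift x i0) j0; shift (shift x j0) k0;
                  shift (shift x i0) k0]) /\ inV m y).

Lemma maximal_eq n m (tau P : pt n -> Prop) : maximal_simplex m tau ->
  (forall y z, P y -> P z -> (mdist y z <= 2)%N) -> (forall t, tau t -> P t) ->
  forall y, tau y <-> P y /\ inV m y.
Proof.
move=> [[Vt _] Hmax] HP Ht y; split.
  by move=> ty; split; [exact: Ht | exact: Vt].
move=> Py; apply: (Hmax (fun y => P y /\ inV m y)) => //.
  by split; [move=> x [] | move=> x z [? _] [? _]; apply: HP].
by move=> x tx; split; [exact: Ht | exact: Vt].
Qed.

Lemma ball_case n m (tau : pt n -> Prop) q : maximal_simplex m tau ->
  (forall t, tau t -> (mdist q t <= 1)%N) -> Concl m tau.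
Proof.
move=> Hm Hq; left; exists q; apply: (maximal_eq Hm) => // y z Hy Hz.
apply: leq_trans (mdist_tri y q z) _; rewrite mdist_sym.
by apply: (leq_trans (leq_add Hy Hz)).
Qed.

Lemma nonempty n m (tau : pt n -> Prop) : maximal_simplex m tau -> exists p, tau p.
Proof.
move=> [_ Hmax]; apply: NNPP => Hno.
have H0 : tau [ffun _ => 0%R].
  apply: (Hmax (fun y => y = [ffun _ => 0%R])) => //.
    split; first by move=> x -> i; rewrite ffunE; split=> //; apply: (ler0n _ m).
    by move=> x y -> ->; rewrite mdistxx.
  by move=> x tx; exfalso; apply: Hno; exists x.
by apply: Hno; exists [ffun _ => 0%R].
Qed.

Lemma width2 n m (tau : pt n -> Prop) t u i : maximal_simplex m tau ->
  tau t -> tau u -> t i = (u i + 2)%R -> Concl m tau.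
Proof.
move=> Hm tt tu Hi; have [[_ Hd] _] := Hm.
have Hj : forall j, j != i -> t j = u j.
  move: (Hd _ _ tu tt); rewrite /mdist (sum_split1 _ i) Hi.
  have -> : absz (u i - (u i + 2))%R = 2%N by lia.
  move=> H j ji; have : (\sum_(k | k != i) absz (u k - t k)%R = 0)%N by lia.
  move=> /eqP; rewrite sum_nat_eq0 => /forallP /(_ j); rewrite ji /= => /eqP; lia.
apply: (ball_case (q := shift u (i, true))) Hm _ => s ts.
move: (Hd _ _ tu ts) (Hd _ _ tt ts); rewrite /mdist !(sum_split1 _ i) !ffunE eqxx /=.
rewrite (eq_bigr (fun k => absz (u k - s k)%R) (P := fun k => k != i) (F1 := fun k => absz (t k - s k)%R)); last first.
  by move=> k ki; rewrite Hj.
rewrite (eq_bigr (fun k => absz (u k - s k)%R) (P := fun k => k != i) (F1 := fun k => absz (shift u (i, true) k - s k)%R)); last first.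
  by move=> k ki; rewrite ffunE (negbTE ki).
rewrite Hi; set R := (\sum_(k | k != i) _)%N; set x := u i; set y := s i; lia.
Qed.
Lemma extract2 n (f : 'I_n -> bool) : (\sum_k (f k : nat))%N = 2%N ->
  exists a b, b != a /\ forall k, f k = (k == a) || (k == b).
Proof.
move=> H0.
case: (pickP f) => [a fa|f0]; last by move: H0; rewrite big1 // => k _; rewrite f0.
have H := H0; move: H; rewrite (sum_split1 _ a) fa => H.
case: (pickP [pred k | (k != a) && f k]) => [b /andP [ba fb]|g0]; last first.
  by move: H; rewrite big1 // => k ka; move: (g0 k); rewrite /= ka /=; case: (f k).
exists a, b; split => //.
move: H0; rewrite (sum_split2 _ ba) fa fb => H0.
have HR : (\sum_(k | (k != a) && (k != b)) (f k : nat))%N = 0%N by lia.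
have R0 := @rest0 _ f (fun k => (k != a) && (k != b)) HR.
move=> k; have [->|ka] := eqVneq k a; first by rewrite fa.
have [->|kb] := eqVneq k b; first by rewrite fb ?orbT.
by rewrite R0 /= ?ka ?kb.
Qed.

Lemma mdist_pat n (p : pt n) s P t : inbox p s t ->
  mdist (pp p s P) t = (\sum_k ((P k (+) dl p t k) : nat))%N.
Proof.
move=> Ht; rewrite (mdist_box (inbox_pp p s P) Ht).
by apply: eq_bigr => k _; rewrite dl_pp.
Qed.

Lemma mdist_p n (p : pt n) s t : inbox p s t ->
  mdist p t = (\sum_k (dl p t k : nat))%N.
Proof. by move=> Ht; rewrite -{1}(pp0 p s) mdist_pat. Qed.

Lemma xsum1 n (P Q : 'I_n -> bool) a :
  (forall k, k != a -> P k = false) ->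
  (\sum_k ((P k (+) Q k) : nat) = (P a (+) Q a) +
     \sum_(k | k != a) (Q k : nat))%N.
Proof.
move=> HP; rewrite (sum_split1 _ a); congr (_ + _)%N.
by apply: eq_bigr => k ka; rewrite HP.
Qed.

Lemma xsum2 n (P Q : 'I_n -> bool) a b : b != a ->
  (forall k, k != a -> k != b -> P k = false) ->
  (\sum_k ((P k (+) Q k) : nat) = (P a (+) Q a) + (P b (+) Q b) +
     \sum_(k | (k != a) && (k != b)) (Q k : nat))%N.
Proof.
move=> ba HP; rewrite (sum_split2 _ ba); congr (_ + _)%N.
by apply: eq_bigr => k /andP [ka kb]; rewrite HP.
Qed.

Lemma pat_det3 n (Q P : 'I_n -> bool) a b c :
  (forall k, (k != a) && (k != b) && (k != c) -> Q k = false) ->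
  (forall k, k != a -> k != b -> k != c -> P k = false) ->
  Q a = P a -> Q b = P b -> Q c = P c -> forall k, Q k = P k.
Proof.
move=> HQ HP Ea Eb Ec k.
have [->|ka] := eqVneq k a => //; have [->|kb] := eqVneq k b => //.
have [->|kc] := eqVneq k c => //; by rewrite HQ ?HP // ka kb kc.
Qed.

Lemma pat_det2 n (Q P : 'I_n -> bool) a b :
  (forall k, (k != a) && (k != b) -> Q k = false) ->
  (forall k, k != a -> k != b -> P k = false) ->
  Q a = P a -> Q b = P b -> forall k, Q k = P k.
Proof.
move=> HQ HP Ea Eb k.
have [->|ka] := eqVneq k a => //; have [->|kb] := eqVneq k b => //.
by rewrite HQ ?HP // ka kb.
Qed.

Lemma box_exists n (tau : pt n -> Prop) p : tau p ->
  (forall t u i, tau t -> tau u -> (absz (t i - u i)%R <= 1)%N) ->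
  exists s, forall t, tau t -> inbox p s t.
Proof.
move=> tp Hw.
exists (fun k => if excluded_middle_informative (exists t, tau t /\ t k = (p k + 1)%R)
                 then true else false).
move=> t tt k; have := Hw t p k tt tp.
case: excluded_middle_informative => [[u [tu Hu]] | Hno] /= H; rewrite /sg.
  by have := Hw t u k tt tu; rewrite Hu; lia.
have : t k <> (p k + 1)%R by move=> E; apply: Hno; exists t.
lia.
Qed.
Ltac simp_eqs := rewrite /= ?eqxx ?orbT ?orbF ?orFb ?orTb ?addTb ?addFb.

Lemma tri_case n m (tau : pt n -> Prop) (p : pt n) s a b c t0 t1 :
  maximal_simplex m tau -> tau p -> (forall t, tau t -> inbox p s t) ->
  b != a -> c != a -> c != b -> tau t0 -> tau t1 ->
  (forall k, dl p t0 k = (k == a) || (k == b)) ->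
  (forall k, dl p t1 k = (k == a) || (k == c)) -> Concl m tau.
Proof.
move=> Hm tp Hb ba ca cb tt0 tt1 P0 P1.
have [[Vt Hd] _] := Hm.
have ab : (a == b) = false by rewrite eq_sym (negbTE ba).
have ac : (a == c) = false by rewrite eq_sym (negbTE ca).
have bc : (b == c) = false by rewrite eq_sym (negbTE cb).
have ba' := negbTE ba; have ca' := negbTE ca; have cb' := negbTE cb.
have E0 : t0 = pp p s (fun k => (k == a) || (k == b)) by apply: pat_eq (Hb _ tt0) P0.
have E1 : t1 = pp p s (fun k => (k == a) || (k == c)) by apply: pat_eq (Hb _ tt1) P1.
have E : forall P t, tau t -> (forall k, k != a -> k != b -> k != c -> P k = false) ->
   mdist (pp p s P) t = ((P a (+) dl p t a) + (P b (+) dl p t b) + (P c (+) dl p t c) +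
      \sum_(k | (k != a) && (k != b) && (k != c)) (dl p t k : nat))%N.
  by move=> P t tt HP; rewrite (mdist_pat _ (Hb t tt)); exact: xsum3.
have Ep : forall t, tau t -> mdist p t = (dl p t a + dl p t b + dl p t c +
      \sum_(k | (k != a) && (k != b) && (k != c)) (dl p t k : nat))%N.
  by move=> t tt; rewrite -{1}(pp0 p s) (E _ _ tt).
have E0t : forall t, tau t -> mdist t0 t = (~~ dl p t a + ~~ dl p t b + dl p t c +
      \sum_(k | (k != a) && (k != b) && (k != c)) (dl p t k : nat))%N.
  move=> t tt; rewrite E0 (E _ _ tt); first by simp_eqs; rewrite ?ab ?ac ?bc ?ba' ?ca' ?cb'.
  by move=> k ka kb kc; rewrite (negbTE ka) (negbTE kb).
have E1t : forall t, tau t -> mdist t1 t = (~~ dl p t a + dl p t b + ~~ dl p t c +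
      \sum_(k | (k != a) && (k != b) && (k != c)) (dl p t k : nat))%N.
  move=> t tt; rewrite E1 (E _ _ tt); first by simp_eqs; rewrite ?ab ?ac ?bc ?ba' ?ca' ?cb'.
  by move=> k ka kb kc; rewrite (negbTE ka) (negbTE kc).
case: (classic (exists t, tau t /\ t <> p /\ dl p t a = false))
  => [[t2 [tt2 [t2p Ha2]]] | Hno]; last first.
  apply: (ball_case (q := pp p s (fun k => k == a))) Hm _ => t tt.
  rewrite (mdist_pat _ (Hb t tt)) (xsum1 _ (a := a)); last by move=> k /negbTE.
  have := Hd _ _ tp tt; rewrite (mdist_p (Hb t tt)) (sum_split1 _ a) eqxx /=.
  case Ea: (dl p t a) => /=; first by lia.
  have tp' : t = p by apply: NNPP => tp'; apply: Hno; exists t.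
  subst t; rewrite big1 //; by move=> k _; rewrite /dl eqxx.
have E2 : mdist p t2 != 0%N by apply/eqP => /mdist0 H; apply: t2p; rewrite H.
have := Hd _ _ tt0 tt2; have := Hd _ _ tt1 tt2; rewrite (E0t _ tt2) (E1t _ tt2).
move: E2; rewrite (Ep _ tt2) Ha2 => H1 H2 H3.
have : [&& (\sum_(k | (k != a) && (k != b) && (k != c)) (dl p t2 k : nat) == 0)%N,
   dl p t2 b & dl p t2 c] by lia.
case/and3P => /eqP R0 Qb Qc.
have P2 : forall k, dl p t2 k = (k == b) || (k == c).
  apply: (pat_det3 (rest0 R0)).
  - by move=> k ka kb kc; rewrite (negbTE kb) (negbTE kc).
  - by rewrite Ha2 ab ac.
  - by rewrite Qb eqxx.
  - by rewrite Qc eqxx orbT.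
have E2' : t2 = pp p s (fun k => (k == b) || (k == c)) by apply: pat_eq (Hb _ tt2) P2.
have E2t : forall t, tau t -> mdist t2 t = (dl p t a + ~~ dl p t b + ~~ dl p t c +
      \sum_(k | (k != a) && (k != b) && (k != c)) (dl p t k : nat))%N.
  move=> t tt; rewrite E2' (E _ _ tt); first by simp_eqs; rewrite ?ab ?ac ?bc ?ba' ?ca' ?cb'.
  by move=> k ka kb kc; rewrite (negbTE kb) (negbTE kc).
right; right; exists p, (a, s a), (b, s b), (c, s c); split.
  by split; rewrite /= ?ab ?bc ?ac.
rewrite (shift2 p s ba) (shift2 p s cb) (shift2 p s ca).
suff H : forall y, tau y <-> (y \in [:: pp p s (fun _ => false);
   pp p s (fun k => (k == a) || (k == b)); pp p s (fun k => (k == b) || (k == c));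
   pp p s (fun k => (k == a) || (k == c))]) /\ inV m y.
  by move=> y; move: (H y); rewrite pp0.
apply: (maximal_eq Hm).
  move=> y z; rewrite !inE => /or4P [] /eqP -> /or4P [] /eqP ->;
  first [ by apply: (@le2_pat _ _ _ _ _ _ _ ba) => k ka kb /=;
            rewrite ?(negbTE ka) ?(negbTE kb) ?orbF ?orFb
        | by apply: (@le2_pat _ _ _ _ _ _ _ cb) => k ka kb /=;
            rewrite ?(negbTE ka) ?(negbTE kb) ?orbF ?orFb
        | by apply: (@le2_pat _ _ _ _ _ _ _ ca) => k ka kb /=;
            rewrite ?(negbTE ka) ?(negbTE kb) ?orbF ?orFb ].
move=> t tt.
have := Hd _ _ tp tt; have := Hd _ _ tt0 tt; have := Hd _ _ tt1 tt; have := Hd _ _ tt2 tt.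
rewrite (Ep _ tt) (E0t _ tt) (E1t _ tt) (E2t _ tt) => G1 G2 G3 G4.
have : ((\sum_(k | (k != a) && (k != b) && (k != c)) (dl p t k : nat) == 0)%N) &&
  [|| ~~ dl p t a && ~~ dl p t b && ~~ dl p t c,
      dl p t a && dl p t b && ~~ dl p t c,
      ~~ dl p t a && dl p t b && dl p t c |
      dl p t a && ~~ dl p t b && dl p t c] by lia.
case/andP => /eqP R1 HQ; have HQ' := rest0 R1.
rewrite !inE; move: HQ; case Ea: (dl p t a); case Eb: (dl p t b); case Ec: (dl p t c) => //= _;
apply/or4P;
[apply: Or42|apply: Or44|apply: Or43|apply: Or41];
apply/eqP; apply: (pat_eq (Hb t tt)); apply: (pat_det3 HQ');
  try (by move=> k ka kb kc; rewrite /= ?(negbTE ka) ?(negbTE kb) ?(negbTE kc));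
  by simp_eqs; rewrite ?Ea ?Eb ?Ec ?ab ?ac ?bc ?ba' ?ca' ?cb'.
Qed.
Lemma cube_case n m (tau : pt n -> Prop) (p : pt n) s :
  maximal_simplex m tau -> tau p -> (forall t, tau t -> inbox p s t) -> Concl m tau.
Proof.
move=> Hm tp Hb; have [[Vt Hd] _] := Hm.
case: (classic (exists t, tau t /\ (1 < mdist p t)%N)) => [[t0 [tt0 H0]] | Hno]; last first.
  apply: (ball_case (q := p)) Hm _ => t tt; rewrite leqNgt; apply/negP => H.
  by apply: Hno; exists t.
have : (\sum_k (dl p t0 k : nat))%N = 2%N.
  by rewrite -(mdist_p (Hb _ tt0)); have := Hd _ _ tp tt0; lia.
case/extract2 => a [b [ba P0]].
have ab : (a == b) = false by rewrite eq_sym (negbTE ba).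
have ba' := negbTE ba.
case: (classic (exists t c, tau t /\ c != a /\ c != b /\ dl p t c))
  => [[t1 [c [tt1 [ca [cb Hc]]]]] | Hno2]; last first.
  right; left; exists p, (a, s a), (b, s b); split; first by rewrite /= ab.
  rewrite (shift2 p s ba) !shift1.
  suff H : forall y, tau y <-> (y \in [:: pp p s (fun _ => false);
     pp p s (fun k => k == a); pp p s (fun k => k == b);
     pp p s (fun k => (k == a) || (k == b))]) /\ inV m y.
    by move=> y; move: (H y); rewrite pp0.
  apply: (maximal_eq Hm).
    move=> y z; rewrite !inE => /or4P [] /eqP -> /or4P [] /eqP ->;
    by apply: (@le2_pat _ _ _ _ _ _ _ ba) => k ka kb /=;
       rewrite ?(negbTE ka) ?(negbTE kb).
  move=> t tt.
  have HQ : forall k, (k != a) && (k != b) -> dl p t k = false.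
    move=> k /andP [ka kb]; apply: negbTE; apply/negP => Hk; apply: Hno2.
    by exists t, k.
  rewrite !inE; case Ea: (dl p t a); case Eb: (dl p t b); apply/or4P;
  [apply: Or44|apply: Or42|apply: Or43|apply: Or41];
  apply/eqP; apply: (pat_eq (Hb t tt)); apply: (pat_det2 HQ);
    try (by move=> k ka kb; rewrite /= ?(negbTE ka) ?(negbTE kb));
    by simp_eqs; rewrite ?Ea ?Eb ?ab ?ba'.
have ac : (a == c) = false by rewrite eq_sym (negbTE ca).
have bc : (b == c) = false by rewrite eq_sym (negbTE cb).
have ca' := negbTE ca; have cb' := negbTE cb.
have E0 : t0 = pp p s (fun k => (k == a) || (k == b)) by apply: pat_eq (Hb _ tt0) P0.
have := Hd _ _ tp tt1; rewrite -{1}(pp0 p s).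
have := Hd _ _ tt0 tt1; rewrite E0 !(mdist_pat _ (Hb _ tt1)).
rewrite !(xsum3 _ ba ca cb); first last.
- by move=> k ka kb kc; rewrite (negbTE ka) (negbTE kb).
- by [].
simp_eqs; rewrite ?ab ?ac ?bc ?ba' ?ca' ?cb' Hc /= => H1 H2.
set R := (\sum_(k | _) _)%N in H1 H2.
have : (R == 0)%N && (dl p t1 a != dl p t1 b) by lia.
case/andP => /eqP R0 Hab; have HQ := rest0 R0.
case Ea: (dl p t1 a) in Hab.
  apply: (tri_case Hm tp Hb ba ca cb tt0 tt1 P0).
  apply: (pat_det3 HQ).
  - by move=> k ka kb kc; rewrite (negbTE ka) (negbTE kc).
  - by rewrite Ea eqxx.
  - by move: Hab; rewrite ba' bc; case: (dl p t1 b).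
  - by rewrite Hc eqxx orbT.
have ab'' : a != b by rewrite ab.
apply: (tri_case Hm tp Hb ab'' cb ca tt0 tt1).
  by move=> k; rewrite P0 orbC.
apply: (pat_det3 HQ).
- by move=> k ka kb kc; rewrite (negbTE kb) (negbTE kc).
- by rewrite Ea ab ac.
- by move: Hab; rewrite eqxx; case: (dl p t1 b).
- by rewrite Hc eqxx orbT.
Qed.

Theorem lemma4p2 (n m : nat) (tau : pt n -> Prop) :
  (2 <= n)%N -> (0 < m)%N -> maximal_simplex m tau ->
  (exists x : pt n, forall y : pt n,
      tau y <-> ((mdist x y <= 1)%N /\ inV m y))
  \/
  (exists (x : pt n) (i0 j0 : sidx n), i0.1 != j0.1 /\
     forall y : pt n, tau y <->
       (y \in [:: x; shift x i0; shift x j0; shift (shift x i0) j0]) /\ inV m y)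
  \/
  (exists (x : pt n) (i0 j0 k0 : sidx n),
     [/\ i0.1 != j0.1, j0.1 != k0.1 & i0.1 != k0.1] /\
     forall y : pt n, tau y <->
       (y \in [:: x; shift (shift x i0) j0; shift (shift x j0) k0;
                  shift (shift x i0) k0]) /\ inV m y).
Proof.
move=> _ _ Hm; have [[_ Hd] _] := Hm; have [p tp] := nonempty Hm.
case: (classic (exists t u i, tau t /\ tau u /\ t i = (u i + 2)%R))
  => [[t [u [i [tt [tu Hi]]]]] | Hno].
  exact: (width2 Hm tt tu Hi).
have Hw : forall t u i, tau t -> tau u -> (absz (t i - u i)%R <= 1)%N.
  move=> t u i tt tu; have := leq_trans (term_le t u i) (Hd _ _ tt tu).
  case: (leqP (absz (t i - u i)%R) 1) => // H1 H2; exfalso.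
  have [E|E] : t i = (u i + 2)%R \/ u i = (t i + 2)%R by lia.
    by apply: Hno; exists t, u, i.
  by apply: Hno; exists u, t, i.
have [s Hb] := box_exists tp Hw.
exact: (cube_case Hm tp Hb).
Qed.
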